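(* Let $A\stackrel{\iota}{\rightarrowtail} G\stackrel{\epsilon}{\twoheadrightarrow} Q$ be a central group extension in which $A$ is finitely generated and $Q$ belongs to $\mathcal{C}$. Then for every prime $p$, $\hat{A}^p\stackrel{\hat{\iota}^p}{\rightarrowtail}\hat{G}^p\stackrel{\hat{\epsilon}^p}{\twoheadrightarrow}\hat{Q}^p$ is a short exact sequence of pro-$p$ groups; equivalently, $\iota(A)$ is topologically $p$-embedded in $G$.
   Context: For a group $G$ and prime $p$, $\hat{G}^p$ denotes the pro-$p$ completion of $G$ and $c_G^p:G\to\hat{G}^p$ the completion map; $\hat{\iota}^p,\hat{\epsilon}^p$ are the induced maps on completions. $\mathbb Z/p$ is regarded as a trivial module for discrete groups and as a trivial discrete topological module for pro-$p$ groups. $\mathcal{C}$ is the class of all groups $G$ such that for every prime $p$ and every integer $n\ge 0$, the map $H^n_{\rm cont}(\hat{G}^p,\mathbb Z/p)\to H^n(G,\mathbb Z/p)$ induced by $c_G^p$ is an isomorphism. A subgroup $H$ of $G$ is topologically $p$-embedded in $G$ if the subspace topology on $H$ induced by the pro-$p$ topology on $G$ equals the pro-$p$ topology of $H$; equivalently, for every normal subgroup $N$ of $H$ of $p$-power index there is a normal subgroup $M$ of $G$ of $p$-power index with $M\cap H\le N$; equivalently, $\hat{H}^p$ embeds in $\hat{G}^p$. *)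

(* Defs.v *)
From HB Require Import structures.
From mathcomp Require Import all_boot all_algebra.
Set Implicit Arguments. Unset Strict Implicit. Unset Printing Implicit Defensive.
Import GRing.Theory.
Local Open Scope ring_scope.

Record group := Group {
  gcar :> Type;
  gmul : gcar -> gcar -> gcar;
  gone : gcar;
  ginv : gcar -> gcar;
  gmulA : forall x y z, gmul x (gmul y z) = gmul (gmul x y) z;
  gmul1g : forall x, gmul gone x = x;
  gmulVg : forall x, gmul (ginv x) x = gone }.

Definition is_hom (G H : group) (f : G -> H) :=
  forall x y, f (gmul x y) = gmul (f x) (f y).

Section Subgroups.
Variable G : group.

Definition is_subgroup (H : G -> Prop) :=
  [/\ H (gone G), (forall x y, H x -> H y -> H (gmul x y)) &
      (forall x, H x -> H (ginv x))].

Definition is_normal (N : G -> Prop) :=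
  is_subgroup N /\ forall x g, N x -> N (gmul (ginv g) (gmul x g)).

Definition has_ppower_index (p : nat) (N : G -> Prop) :=
  exists k, exists r : 'I_(p ^ k) -> G,
    forall g, exists! i, N (gmul (ginv (r i)) g).

Definition p_normal (p : nat) (N : G -> Prop) :=
  is_normal N /\ has_ppower_index p N.

Definition fin_gen :=
  exists (k : nat) (s : nat -> G), forall H : G -> Prop, is_subgroup H ->
    (forall i, (i < k)%N -> H (s i)) -> forall x, H x.

End Subgroups.

(* Inhomogeneous cochains with trivial coefficients in a ring R:
   an n-cochain is a function (nat -> T) -> R depending only on the first
   n arguments; [cobound mul n f] is the standard coboundary d f. *)
Section Cochains.
Variables (T : Type) (mul : T -> T -> T) (R : pzRingType).

Definition shift (g : nat -> T) : nat -> T := fun j => g j.+1.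
Definition merge (i : nat) (g : nat -> T) : nat -> T :=
  fun j => if (j < i)%N then g j else if j == i then mul (g j) (g j.+1)
           else g j.+1.

Definition cobound (n : nat) (f : (nat -> T) -> R) : (nat -> T) -> R :=
  fun g => f (shift g) + \sum_(i < n) (-1) ^+ i.+1 * f (merge i g)
           + (-1) ^+ n.+1 * f g.
End Cochains.

Section Discrete.
Variables (G : group) (R : pzRingType).

Definition dcochain (n : nat) (f : (nat -> G) -> R) :=
  forall g g', (forall i, (i < n)%N -> g i = g' i) -> f g = f g'.
Definition dcocycle n (f : (nat -> G) -> R) :=
  dcochain n f /\ forall g, cobound (@gmul G) n f g = 0.
Definition dcoboundary n (f : (nat -> G) -> R) :=
  match n with
  | 0 => forall g, f g = 0
  | n'.+1 => exists h, dcochain n' h /\ forall g, f g = cobound (@gmul G) n' h g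
  end.
End Discrete.

(* Pro-p completion: elements are compatible families (x_N)_N indexed by the
   normal subgroups N of p-power index, x_N representing a coset of N. *)
Section Completion.
Variables (G : group) (p : nat).

Definition fam := (G -> Prop) -> G.

Definition compatible (x : fam) :=
  forall N M, p_normal p N -> p_normal p M -> (forall g, M g -> N g) ->
    N (gmul (ginv (x N)) (x M)).

Definition ceq (N : G -> Prop) (x y : fam) := N (gmul (ginv (x N)) (y N)).

Definition fmul (x y : fam) : fam := fun N => gmul (x N) (y N).

Definition cembed (g : G) : fam := fun _ => g.

Variable R : pzRingType.

(* continuous n-cochain on the pro-p completion (locally constant:
   factors through (G/N)^n for some open normal subgroup) *)
Definition ccochain (n : nat) (f : (nat -> fam) -> R) :=
  exists N, p_normal p N /\
    forall x y, (forall i, compatible (x i)) -> (forall i, compatible (y i)) ->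
      (forall i, (i < n)%N -> ceq N (x i) (y i)) -> f x = f y.
Definition ccocycle n (f : (nat -> fam) -> R) :=
  ccochain n f /\
  forall x, (forall i, compatible (x i)) -> cobound fmul n f x = 0.
Definition ccoboundary n (f : (nat -> fam) -> R) :=
  match n with
  | 0 => forall x, (forall i, compatible (x i)) -> f x = 0
  | n'.+1 => exists h, ccochain n' h /\
      forall x, (forall i, compatible (x i)) -> f x = cobound fmul n' h x
  end.

Definition pullback (f : (nat -> fam) -> R) : (nat -> G) -> R :=
  fun g => f (fun i => cembed (g i)).
End Completion.

(* The class C: for all primes p and n >= 0 the map
   H^n_cont(\hat G^p, Z/p) -> H^n(G, Z/p) is bijective (injective and surjective). *)
Definition in_class_C (Q : group) :=
  forall p, prime p -> forall n : nat,
    (forall f : (nat -> fam Q) -> 'F_p,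
        ccocycle p n f -> dcoboundary n (pullback f) -> ccoboundary p n f) /\
    (forall f : (nat -> Q) -> 'F_p, dcocycle n f ->
        exists f', ccocycle p n f' /\ dcoboundary n (fun g => f g - pullback f' g)).

Definition central_extension (A G Q : group) (iota : A -> G) (eps : G -> Q) :=
  [/\ is_hom iota, is_hom eps, injective iota,
      (forall q, exists g, eps g = q) &
      ((forall g, (exists a, iota a = g) <-> eps g = gone Q) /\
       (forall a g, gmul (iota a) g = gmul g (iota a)))].

Definition top_p_embedded (A G : group) (iota : A -> G) (p : nat) :=
  forall N : A -> Prop, p_normal p N ->
    exists M : G -> Prop, p_normal p M /\ forall a, M (iota a) -> N a.

(* Main.v *)
From Pilot Require Import Defs.
From mathcomp Require Import all_boot all_algebra.
From HB Require Import structures.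
From mathcomp Require Import all_fingroup all_solvable.
From mathcomp Require Import boolp ring.
Set Implicit Arguments. Unset Strict Implicit. Unset Printing Implicit Defensive.

Module M_P0.
Section GroupBasics.
Variable G : Defs.group.
Local Notation "x ** y" := (@gmul G x y) (at level 40, left associativity).
Local Notation "x ^^-1" := (@ginv G x) (at level 3).
Local Notation e := (@gone G).

Lemma mulgA' (x y z : G) : x ** (y ** z) = x ** y ** z. Proof. exact: gmulA. Qed.
Lemma mul1g' (x : G) : e ** x = x. Proof. exact: gmul1g. Qed.
Lemma mulVg' (x : G) : x^^-1 ** x = e. Proof. exact: gmulVg. Qed.
Lemma mulgV' (x : G) : x ** x^^-1 = e.
Proof.
rewrite -[x ** _]mul1g' -[in LHS](mulVg' (x^^-1)) -mulgA' (mulgA' x^^-1 x) mulVg'.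
by rewrite mul1g' mulVg'.
Qed.
Lemma mulg1' (x : G) : x ** e = x.
Proof. by rewrite -(mulVg' x) mulgA' mulgV' mul1g'. Qed.
Lemma mulKg' (x y : G) : x^^-1 ** (x ** y) = y.
Proof. by rewrite mulgA' mulVg' mul1g'. Qed.
Lemma mulKVg' (x y : G) : x ** (x^^-1 ** y) = y.
Proof. by rewrite mulgA' mulgV' mul1g'. Qed.
Lemma mulgK' (x y : G) : x ** y ** y^^-1 = x.
Proof. by rewrite -mulgA' mulgV' mulg1'. Qed.
Lemma mulgKV' (x y : G) : x ** y^^-1 ** y = x.
Proof. by rewrite -mulgA' mulVg' mulg1'. Qed.
Lemma mulgI' (x y z : G) : x ** y = x ** z -> y = z.
Proof. by move=> h; rewrite -(mulKg' x y) h mulKg'. Qed.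
Lemma mulIg' (x y z : G) : y ** x = z ** x -> y = z.
Proof. by move=> h; rewrite -(mulgK' y x) h mulgK'. Qed.
Lemma invg1' : e^^-1 = e. Proof. by rewrite -[LHS]mulg1' mulVg'. Qed.
Lemma invgK' (x : G) : (x^^-1)^^-1 = x.
Proof. by apply: (@mulIg' x^^-1); rewrite mulVg' mulgV'. Qed.
Lemma invMg' (x y : G) : (x ** y)^^-1 = y^^-1 ** x^^-1.
Proof.
apply: (@mulgI' (x ** y)); rewrite mulgV' -mulgA' (mulgA' y) mulgV' mul1g'.
by rewrite mulgV'.
Qed.
Lemma invg_eq1 (x y : G) : x ** y = e -> y = x^^-1.
Proof. by move=> h; apply: (@mulgI' x); rewrite h mulgV'. Qed.
End GroupBasics.

Lemma hom1 (G H : Defs.group) (f : G -> H) : is_hom f -> f (gone G) = gone H.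
Proof.
move=> hf; apply: (@mulgI' _ (f (gone G))); rewrite -hf mul1g' mulg1' //.
Qed.
Lemma homV (G H : Defs.group) (f : G -> H) (x : G) : is_hom f -> f (ginv x) = ginv (f x).
Proof.
move=> hf; apply: invg_eq1; rewrite -hf mulgV' hom1 //.
Qed.

End M_P0.
Import M_P0.

Module M_P1.
Section PermRep.
Variable G : Defs.group.
Local Notation "x ** y" := (@gmul G x y) (at level 40, left associativity).
Local Notation "x ^^-1" := (@ginv G x) (at level 3).
Local Notation e := (@gone G).
Variable V : G -> Prop.
Hypothesis Vn : is_normal V.
Variable n : nat.
Variable r : 'I_n -> G.
Hypothesis ru : forall g, exists! i, V ((r i)^^-1 ** g).

Lemma V1 : V e. Proof. by case: Vn => -[]. Qed.
Lemma VM x y : V x -> V y -> V (x ** y). Proof. by case: Vn => -[] _ h _ _; apply: h. Qed.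
Lemma VV x : V x -> V x^^-1. Proof. by case: Vn => -[] _ _ h _; apply: h. Qed.
Lemma VJ x g : V x -> V (g^^-1 ** (x ** g)). Proof. by case: Vn => _ h; apply: h. Qed.
Lemma VJ' x g : V x -> V (g ** (x ** g^^-1)).
Proof. by move=> /(VJ (g^^-1)); rewrite invgK'. Qed.

Lemma Vtrans x y z : V (x^^-1 ** y) -> V (y^^-1 ** z) -> V (x^^-1 ** z).
Proof. by move=> h1 h2; have := VM h1 h2; rewrite -mulgA' mulKVg'. Qed.
Lemma Vsym x y : V (x^^-1 ** y) -> V (y^^-1 ** x).
Proof. by move/VV; rewrite invMg' invgK'. Qed.
Lemma Vrefl x : V (x^^-1 ** x). Proof. by rewrite mulVg'; exact: V1. Qed.
Lemma Vmull x y z : V (y^^-1 ** z) -> V ((x ** y)^^-1 ** (x ** z)).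
Proof. by rewrite invMg' -mulgA' mulKg'. Qed.
Lemma Vmulr x y z : V (y^^-1 ** z) -> V ((y ** x)^^-1 ** (z ** x)).
Proof.
move=> h; rewrite invMg' -mulgA' (mulgA' y^^-1).
by apply: VJ.
Qed.

Lemma ru_ex g : exists i, V ((r i)^^-1 ** g).
Proof. by case: (ru g) => i [h _]; exists i. Qed.
Definition idx (g : G) : 'I_n := proj1_sig (cid (ru_ex g)).
Lemma idxP g : V ((r (idx g))^^-1 ** g).
Proof. exact: (proj2_sig (cid (ru_ex g))). Qed.
Lemma idx_uniq g i : V ((r i)^^-1 ** g) -> i = idx g.
Proof.
move=> h; case: (ru g) => j [_ hj].
by rewrite -(hj _ h) -(hj _ (idxP g)).
Qed.
Lemma idx_eq g h : V (g^^-1 ** h) -> idx g = idx h.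
Proof. by move=> gh; apply: idx_uniq; apply: Vtrans (idxP g) gh. Qed.
Lemma idx_eqV g h : idx g = idx h -> V (g^^-1 ** h).
Proof.
move=> e1; apply: Vtrans (Vsym (idxP g)) _; rewrite e1; exact: idxP.
Qed.
Lemma idx_r i : idx (r i) = i.
Proof. by symmetry; apply: idx_uniq; exact: Vrefl. Qed.

Definition sig_fun (x : G) (i : 'I_n) : 'I_n := idx (x^^-1 ** r i).
Lemma sig_inj x : injective (sig_fun x).
Proof.
move=> i j /idx_eqV h.
have : V ((r i)^^-1 ** r j).
  by move: (Vmull x h); rewrite !mulKVg'.
by move=> /idx_eq; rewrite !idx_r.
Qed.
Definition psi (x : G) : {perm 'I_n} := perm (@sig_inj x).
Lemma psiE x i : psi x i = idx (x^^-1 ** r i).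
Proof. by rewrite permE. Qed.

Lemma psiM x y : psi (x ** y) = (psi x * psi y)%g.
Proof.
apply/permP => i; rewrite permM !psiE; apply: idx_eq.
have h := idxP (x^^-1 ** r i).
rewrite (invMg' x y) -(mulgA' y^^-1); exact: Vmull (Vsym h).
Qed.

Lemma psi1 : psi e = 1%g.
Proof. by apply/permP => i; rewrite psiE perm1 invg1' mul1g' idx_r. Qed.

Lemma psi_ker z : psi z = 1%g -> V z.
Proof.
move=> /(congr1 (fun s : {perm 'I_n} => s (idx e))); rewrite psiE perm1 => h.
have h1 := idxP e; rewrite mulg1' in h1.
have := idxP (z^^-1 ** r (idx e)); rewrite h => h2.
set t := r (idx e) in h1 h2.
have h3 := VM (VM (VV h1) h2) h1.
rewrite invgK' mulKVg' mulgK' in h3.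
by have := VV h3; rewrite invgK'.
Qed.

Lemma psi_eq x y : psi x = psi y <-> V (x^^-1 ** y).
Proof.
split.
  move=> h; apply: psi_ker; rewrite psiM -h -psiM mulVg'; exact: psi1.
move=> h; apply/permP => i; rewrite !psiE; apply: idx_eq.
rewrite invMg' invgK' -mulgA' (mulgA' x).
have h2 : V (x ** y^^-1).
  by have := VJ' x (VV h); rewrite invMg' invgK' mulgK'.
exact: VJ.
Qed.

Definition Pimg : {set {perm 'I_n}} := [set psi (r i) | i : 'I_n].
Lemma psi_in x : psi x \in Pimg.
Proof.
apply/imsetP; exists (idx x) => //; apply/psi_eq; apply: Vsym; exact: idxP.
Qed.
Lemma Pimg_group : group_set Pimg.
Proof.
apply/group_setP; split; first by rewrite -psi1; exact: psi_in.
move=> a b /imsetP[i _ ->] /imsetP[j _ ->]; rewrite -psiM; exact: psi_in.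
Qed.
Canonical Pimg_grp := Group Pimg_group.
Lemma card_Pimg : #|Pimg| = n.
Proof.
rewrite card_imset ?card_ord // => i j /psi_eq h.
by have := idx_eq h; rewrite !idx_r.
Qed.

Fixpoint gpow (x : G) (m : nat) : G := if m is m'.+1 then x ** gpow x m' else e.
Lemma psi_pow x m : psi (gpow x m) = ((psi x) ^+ m)%g.
Proof. by elim: m => [|m ih] /=; rewrite ?psi1 // psiM ih expgS. Qed.
Lemma V_pow x : V (gpow x n).
Proof.
have : psi (gpow x n) = psi e.
  rewrite psi_pow psi1.
  have hd : (#[psi x] %| #|Pimg|)%g by apply: (@order_dvdG _ Pimg_grp); exact: psi_in.
  rewrite card_Pimg in hd; by apply/eqP; rewrite -order_dvdn.
by move=> /psi_eq; rewrite mulg1' => /VV; rewrite invgK'.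
Qed.
End PermRep.

Section Inter.
Variable G : Defs.group.
Local Notation "x ** y" := (@gmul G x y) (at level 40, left associativity).
Local Notation "x ^^-1" := (@ginv G x) (at level 3).
Local Notation e := (@gone G).

Lemma p_normal_I (p : nat) (U V : G -> Prop) : prime p ->
  p_normal p U -> p_normal p V -> p_normal p (fun x => U x /\ V x).
Proof.
move=> pp [Un [kU [rU ruU]]] [Vn [kV [rV ruV]]].
have Wn : is_normal (fun x => U x /\ V x).
  split; first split.
  - by split; apply: V1.
  - by move=> x y [] ? ? [] ? ?; split; apply: VM.
  - by move=> x [] ? ?; split; apply: VV.
  by move=> x g [] ? ?; split; apply: VJ.
split=> //.
pose Psi (x : G) : ({perm 'I_(p ^ kU)} * {perm 'I_(p ^ kV)})%type :=
  (psi Un ruU x, psi Vn ruV x).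
pose H := [set z | `[< exists x, Psi x = z >]].
have PsiH x : Psi x \in H by rewrite inE; apply/asboolP; exists x.
have PsiM x y : Psi (x ** y) = (Psi x * Psi y)%g.
  by rewrite /Psi !psiM.
have gH : group_set H.
  apply/group_setP; split.
    have -> : (1%g : ({perm 'I_(p ^ kU)} * {perm 'I_(p ^ kV)})%type) = Psi e.
      by rewrite /Psi !psi1.
    exact: PsiH.
  move=> a b; rewrite !inE => /asboolP[x <-] /asboolP[y <-].
  by apply/asboolP; exists (x ** y); rewrite PsiM.
pose Hg := Group gH.
have sH : H \subset setX (Pimg Un ruU) (Pimg Vn ruV).
  apply/subsetP => z; rewrite inE => /asboolP[x <-].
  by rewrite inE /= !psi_in.
have hd : #|H| %| p ^ (kU + kV).
  have := cardSg (G := [group of setX (Pimg_grp Un ruU) (Pimg_grp Vn ruV)]) (H := Hg) sH.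
  by rewrite /= cardsX !card_Pimg expnD.
case/(dvdn_pfactor _ _ pp): hd => m _ hm.
exists m.
have hx (i : 'I_(p ^ m)) : exists x, Psi x = enum_val (cast_ord (esym hm) i).
  have := enum_valP (cast_ord (esym hm) i); rewrite inE => /asboolP.
  done.
exists (fun i => proj1_sig (cid (hx i))).
move=> g.
have PsiE x y : Psi x = Psi y <-> (U (x^^-1 ** y) /\ V (x^^-1 ** y)).
  split.
    by case=> /(psi_eq Un ruU) ? /(psi_eq Vn ruV).
  by case=> /(psi_eq Un ruU) h1 /(psi_eq Vn ruV) h2; rewrite /Psi h1 h2.
pose i0 := cast_ord hm (enum_rank_in (PsiH e) (Psi g)).
exists i0; split.
  apply/PsiE; rewrite (proj2_sig (cid (hx i0))) /i0 cast_ordK.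
  by rewrite enum_rankK_in // PsiH.
move=> j /PsiE; rewrite (proj2_sig (cid (hx j))) => hj.
apply: (@cast_ord_inj _ _ (esym hm)); rewrite /i0 cast_ordK.
apply: enum_val_inj; rewrite hj enum_rankK_in //; exact: PsiH.
Qed.
End Inter.

End M_P1.
Import M_P1.

Module M_P2.
Import GRing.Theory.
Local Open Scope ring_scope.

Lemma zmod_lin (V : zmodType) (E : forall W : zmodType, (nat -> W) -> W) (a : nat -> V) :
  (forall (W1 W2 : zmodType) (L : W1 -> W2), (forall u v, L (u + v) = L u + L v) ->
     (forall u, L (- u) = - L u) -> forall x, L (E W1 x) = E W2 (fun i => L (x i))) ->
  (forall (R : comNzRingType) (x : nat -> R), E R x = 0) -> E V a = 0.
Proof.
move=> hL hR.
pose L (q : {poly int}) : V := \sum_(i < size q) a i *~ q`_i.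
have Lext (q : {poly int}) n : (size q <= n)%N -> L q = \sum_(i < n) a i *~ q`_i.
  move=> hn; rewrite /L (big_ord_widen n (fun i => a i *~ q`_i) hn) big_mkcond /=.
  apply: eq_bigr => i _; case: ifP => // /negbT; rewrite -leqNgt => hi.
  by rewrite nth_default // mulr0z.
have LD (u v : {poly int}) : L (u + v) = L u + L v.
  pose n := maxn (size u) (size v).
  rewrite (Lext (u + v) n) ?(leq_trans (size_polyD _ _)) //.
  rewrite (Lext u n) ?leq_maxl // (Lext v n) ?leq_maxr // -big_split /=.
  by apply: eq_bigr => i _; rewrite coefD mulrzDr.
have LN (u : {poly int}) : L (- u) = - L u.
  rewrite /L size_polyN -sumrN; apply: eq_bigr => i _.
  by rewrite coefN mulrNz.
have LX i : L 'X^i = a i.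
  rewrite /L size_polyXn (bigD1 (Ordinal (ltnSn i))) //= coefXn eqxx.
  rewrite big1 ?addr0 // => j hj; rewrite coefXn.
  case: eqP => [hji|] /=; last by rewrite mulr0z.
  by exfalso; move/eqP: hj; apply; apply: val_inj.
have -> : a = (fun i => L 'X^i) by apply: funext => i; rewrite LX.
by rewrite -(hL _ _ L LD LN) hR /L size_poly0 big_ord0.
Qed.

Section Cochain.
Variable Q : Defs.group.
Local Notation "x ** y" := (@gmul Q x y) (at level 40, left associativity).
Variable W : zmodType.

Definition d1 (h : Q -> W) (x y : Q) : W := h y - h (x ** y) + h x.
Definition d2 (F : Q -> Q -> W) (x y z : Q) : W :=
  F y z - F (x ** y) z + F x (y ** z) - F x y.
Definition d3 (K : Q -> Q -> Q -> W) (x y z w : Q) : W :=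
  K y z w - K (x ** y) z w + K x (y ** z) w - K x y (z ** w) + K x y z.

Lemma d2d1 h x y z : d2 (d1 h) x y z = 0.
Proof.
rewrite /d2 /d1 -!mulgA'.
apply: (@zmod_lin _ (fun W t => (t 0%N - t 1%N + t 2%N) - (t 0%N - t 3%N + t 4%N)
   + (t 1%N - t 3%N + t 5%N) - (t 2%N - t 4%N + t 5%N))
  (fun i => match i with 0 => h z | 1 => h (y ** z) | 2 => h y
     | 3 => h (x ** (y ** z)) | 4 => h (x ** y) | _ => h x end)).
  by move=> W1 W2 L hD hN t; rewrite !(hD, hN).
by move=> R t; ring.
Qed.
Lemma d3d2 F x y z w : d3 (d2 F) x y z w = 0.
Proof.
rewrite /d3 /d2 -!mulgA'.
apply: (@zmod_lin _ (fun W t =>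
  (t 0%N - t 1%N + t 2%N - t 3%N) - (t 0%N - t 4%N + t 5%N - t 6%N)
  + (t 1%N - t 4%N + t 7%N - t 8%N) - (t 2%N - t 5%N + t 7%N - t 9%N)
  + (t 3%N - t 6%N + t 8%N - t 9%N))
  (fun i => match i with 0 => F z w | 1 => F (y ** z) w | 2 => F y (z ** w)
     | 3 => F y z | 4 => F (x ** (y ** z)) w | 5 => F (x ** y) (z ** w)
     | 6 => F (x ** y) z | 7 => F x (y ** (z ** w)) | 8 => F x (y ** z)
     | _ => F x y end)).
  by move=> W1 W2 L hD hN t; rewrite !(hD, hN).
by move=> R t; ring.
Qed.

Lemma d2D (F G : Q -> Q -> W) x y z :
  d2 (fun a b => F a b + G a b) x y z = d2 F x y z + d2 G x y z.
Proof.
rewrite /d2; apply/eqP; rewrite -subr_eq0; apply/eqP.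
apply: (@zmod_lin _ (fun W t =>
  ((t 0%N + t 1%N) - (t 2%N + t 3%N) + (t 4%N + t 5%N) - (t 6%N + t 7%N))
  - ((t 0%N - t 2%N + t 4%N - t 6%N) + (t 1%N - t 3%N + t 5%N - t 7%N)))
  (fun i => match i with 0 => F y z | 1 => G y z | 2 => F (x ** y) z
     | 3 => G (x ** y) z | 4 => F x (y ** z) | 5 => G x (y ** z)
     | 6 => F x y | _ => G x y end)).
  by move=> W1 W2 L hD hN t; rewrite !(hD, hN).
by move=> R t; ring.
Qed.
Lemma d2N (F : Q -> Q -> W) x y z :
  d2 (fun a b => - F a b) x y z = - d2 F x y z.
Proof. by rewrite /d2 !opprD !opprK. Qed.
Lemma d2B (F G : Q -> Q -> W) x y z :
  d2 (fun a b => F a b - G a b) x y z = d2 F x y z - d2 G x y z.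
Proof. by rewrite d2D d2N. Qed.
Lemma d1D (h k : Q -> W) x y :
  d1 (fun a => h a + k a) x y = d1 h x y + d1 k x y.
Proof.
rewrite /d1; apply/eqP; rewrite -subr_eq0; apply/eqP.
apply: (@zmod_lin _ (fun W t =>
  ((t 0%N + t 1%N) - (t 2%N + t 3%N) + (t 4%N + t 5%N))
  - ((t 0%N - t 2%N + t 4%N) + (t 1%N - t 3%N + t 5%N)))
  (fun i => match i with 0 => h y | 1 => k y | 2 => h (x ** y)
     | 3 => k (x ** y) | 4 => h x | _ => k x end)).
  by move=> W1 W2 L hD hN t; rewrite !(hD, hN).
by move=> R t; ring.
Qed.
Lemma d1N (h : Q -> W) x y : d1 (fun a => - h a) x y = - d1 h x y.
Proof. by rewrite /d1 !opprD !opprK. Qed.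
End Cochain.

End M_P2.
Import M_P2.

Module M_P3.
Import GRing.Theory.
Local Open Scope ring_scope.

Section Bridge.
Variable Q : Defs.group.
Local Notation "x ** y" := (@gmul Q x y) (at level 40, left associativity).
Local Notation "x ^^-1" := (@ginv Q x) (at level 3).
Local Notation e := (@gone Q).
Variable p : nat.
Hypothesis pp : prime p.
Hypothesis QC : in_class_C Q.

Definition cts2 (V : Type) (U : Q -> Prop) (f : Q -> Q -> V) :=
  forall x y x' y', U (x^^-1 ** x') -> U (y^^-1 ** y') -> f x y = f x' y'.
Definition cts3 (V : Type) (U : Q -> Prop) (f : Q -> Q -> Q -> V) :=
  forall x y z x' y' z', U (x^^-1 ** x') -> U (y^^-1 ** y') -> U (z^^-1 ** z') ->
    f x y z = f x' y' z'.

Definition sq2 (x y : Q) : nat -> Q := fun i => if i == 0%N then x else y.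
Definition sq3 (x y z : Q) : nat -> Q :=
  fun i => if i == 0%N then x else if i == 1%N then y else z.

Lemma cob1E (T : Type) (mul : T -> T -> T) (R : comPzRingType) f g :
  cobound mul 1 f g = f (shift g) - f (Defs.merge mul 0 g) + f g :> R.
Proof. rewrite /cobound big_ord_recr big_ord0 /=; rewrite add0r !exprS expr0; ring. Qed.
Lemma cob2E (T : Type) (mul : T -> T -> T) (R : comPzRingType) f g :
  cobound mul 2 f g = f (shift g) - f (Defs.merge mul 0 g) + f (Defs.merge mul 1 g) - f g :> R.
Proof. rewrite /cobound !big_ord_recr big_ord0 /=; rewrite add0r !exprS expr0; ring. Qed.
Lemma cob3E (T : Type) (mul : T -> T -> T) (R : comPzRingType) f g :
  cobound mul 3 f g = f (shift g) - f (Defs.merge mul 0 g) + f (Defs.merge mul 1 g)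
     - f (Defs.merge mul 2 g) + f g :> R.
Proof. rewrite /cobound !big_ord_recr big_ord0 /=; rewrite add0r !exprS expr0; ring. Qed.

Lemma cembed_comp (g : Q) : compatible p (cembed g).
Proof. move=> N M [[[h1 _ _] _] _] _ _; by rewrite /cembed mulVg'. Qed.

Lemma fmul_comp (x y : fam Q) : compatible p x -> compatible p y -> compatible p (fmul x y).
Proof.
move=> hx hy N M hN hM hMN; rewrite /fmul.
have h1 := hx N M hN hM hMN; have h2 := hy N M hN hM hMN.
case: hN => [[[_ hm _] hj] _].
have -> : (x N ** y N)^^-1 ** (x M ** y M) =
  (y N)^^-1 ** (((x N)^^-1 ** x M) ** y N) ** ((y N)^^-1 ** y M).
  by rewrite invMg' !mulgA' mulgK'.
by apply: hm => //; apply: hj.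
Qed.

Lemma shift_comp (x : nat -> fam Q) : (forall i, compatible p (x i)) ->
  forall i, compatible p (shift x i).
Proof. by move=> h i; exact: h. Qed.
Lemma merge_comp (x : nat -> fam Q) j : (forall i, compatible p (x i)) ->
  forall i, compatible p (Defs.merge (@fmul Q) j x i).
Proof.
move=> h i; rewrite /Defs.merge; case: ifP => _; first exact: h.
case: ifP => _; last exact: h.
exact: fmul_comp.
Qed.

Lemma ccochain_ext (R : pzRingType) n (f : (nat -> fam Q) -> R) :
  ccochain p n f -> forall x y, (forall i, compatible p (x i)) ->
  (forall i, compatible p (y i)) -> (forall i, (i < n)%N -> x i = y i) -> f x = f y.
Proof.
move=> [N [[[[h1 _ _] _] _] hf]] x y hx hy hxy; apply: hf => // i /hxy ->.
by rewrite /ceq mulVg'.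
Qed.

Definition cs2 (x y : Q) : nat -> fam Q := fun i => cembed (sq2 x y i).
Lemma cs2_comp x y i : compatible p (cs2 x y i).
Proof. exact: cembed_comp. Qed.

Lemma cob2_fam (R : comPzRingType) (k : (nat -> fam Q) -> R) x y z : ccochain p 2 k ->
  cobound (@fmul Q) 2 k (fun i => cembed (sq3 x y z i)) =
  d2 (fun a b => k (cs2 a b)) x y z.
Proof.
move=> hk; rewrite cob2E /d2.
have hc : forall i, compatible p (cembed (sq3 x y z i)) by move=> i; exact: cembed_comp.
congr (_ - _ + _ - _); apply: (ccochain_ext hk);
  try (by apply: shift_comp); try (by apply: merge_comp); try exact: cs2_comp;
  by case=> [|[|i]].
Qed.

Lemma cts_fam (R : pzRingType) (k : (nat -> fam Q) -> R) : ccochain p 2 k ->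
  exists U, p_normal p U /\ cts2 U (fun a b => k (cs2 a b)).
Proof.
move=> hk; case: (hk) => N [hN hf]; exists N; split => // x y x' y' h1 h2.
apply: hf; try exact: cs2_comp.
by case=> [|[|i]] // _; rewrite /ceq /cs2 /cembed.
Qed.

Lemma cob2_disc (R : comPzRingType) (phi : Q -> Q -> R) g :
  cobound (@gmul Q) 2 (fun g => phi (g 0%N) (g 1%N)) g = d2 phi (g 0%N) (g 1%N) (g 2%N).
Proof. by rewrite cob2E. Qed.

Local Notation Fp := 'F_p.

Lemma surj2 (phi : Q -> Q -> Fp) : (forall x y z, d2 phi x y z = 0) ->
  exists U (mu : Q -> Q -> Fp) (eta : Q -> Fp), p_normal p U /\ cts2 U mu /\
    (forall x y z, d2 mu x y z = 0) /\ forall x y, phi x y = mu x y + d1 eta x y.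
Proof.
move=> hphi.
have hco : dcocycle 2 (fun g : nat -> Q => phi (g 0%N) (g 1%N)).
  split; first by move=> g g' hg; rewrite !hg.
  by move=> g; rewrite cob2_disc hphi.
case: (QC pp 2) => _ /(_ _ hco) [f' [[hf'c hf'z] [h [hh hfh]]]].
case: (cts_fam hf'c) => U [hU hcts].
exists U, (fun a b => f' (cs2 a b)), (fun a => h (fun _ => a)).
split=> //; split=> //; split.
  move=> x y z; rewrite -cob2_fam //; apply: hf'z => i; exact: cembed_comp.
move=> x y.
have E : d1 (fun a => h (fun _ => a)) x y = phi x y - f' (cs2 x y).
  have := hfh (sq2 x y); rewrite cob1E /= /pullback => ->.
  rewrite /d1; congr (_ - _ + _); apply: hh; by case.
by rewrite E addrC subrK.
Qed.

Lemma inj3 (phi3 : Q -> Q -> Q -> Fp) U : p_normal p U -> cts3 U phi3 ->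
  (forall x y z w, d3 phi3 x y z w = 0) ->
  (exists beta, forall x y z, phi3 x y z = d2 beta x y z) ->
  exists U' (kappa : Q -> Q -> Fp), p_normal p U' /\ cts2 U' kappa /\
    forall x y z, phi3 x y z = d2 kappa x y z.
Proof.
move=> hU hc hz [beta hb].
pose f3 (x : nat -> fam Q) := phi3 (x 0%N U) (x 1%N U) (x 2%N U).
have hf3 : ccocycle p 3 f3.
  split.
    exists U; split=> // x y hx hy hxy; rewrite /f3.
    by apply: hc; apply: hxy.
  by move=> x hx; rewrite cob3E /f3 /=; exact: hz.
have hpb : dcoboundary 3 (pullback f3).
  exists (fun g => beta (g 0%N) (g 1%N)); split; first by move=> g g' hg; rewrite !hg.
  by move=> g; rewrite cob2_disc /pullback /f3 /cembed hb.
case: (QC pp 3) => /(_ _ hf3 hpb) [k [hk hkf]] _.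
case: (cts_fam hk) => U' [hU' hcts].
exists U', (fun a b => k (cs2 a b)); split=> //; split=> // x y z.
rewrite -cob2_fam // -hkf; first by [].
move=> i; exact: cembed_comp.
Qed.
End Bridge.

End M_P3.
Import M_P3.

Module M_P4.
Import GRing.Theory.
Local Open Scope ring_scope.

Section Main.
Variable Q : Defs.group.
Local Notation "x ** y" := (@gmul Q x y) (at level 40, left associativity).
Local Notation "x ^^-1" := (@ginv Q x) (at level 3).
Variable p : nat.
Hypothesis pp : prime p.
Hypothesis QC : in_class_C Q.
Local Notation Fp := 'F_p.

Variable A : Defs.group.
Hypothesis Acomm : forall x y : A, gmul x y = gmul y x.
Definition Ab : Type := gcar A.
HB.instance Definition _ := gen_eqMixin Ab.
HB.instance Definition _ := gen_choiceMixin Ab.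
Lemma Ab_addA : associative (fun x y : Ab => gmul x y). Proof. move=> x y z; exact: gmulA. Qed.
Lemma Ab_addC : commutative (fun x y : Ab => gmul x y). Proof. exact: Acomm. Qed.
Lemma Ab_add0 : left_id (gone A : Ab) (fun x y : Ab => gmul x y). Proof. exact: gmul1g. Qed.
Lemma Ab_addN : left_inverse (gone A : Ab) (@ginv A : Ab -> Ab) (fun x y : Ab => gmul x y). Proof. exact: gmulVg. Qed.
HB.instance Definition _ := GRing.isZmodule.Build Ab Ab_addA Ab_addC Ab_add0 Ab_addN.
Lemma Ab_addE (x y : Ab) : x + y = gmul x y. Proof. by []. Qed.
Lemma Ab_oppE (x : Ab) : - x = ginv x. Proof. by []. Qed.
Lemma Ab_zeroE : (0 : Ab) = gone A. Proof. by []. Qed.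

Record zsub (X : Ab -> Prop) := ZSub {
  zs0 : X 0; zsD : forall u v, X u -> X v -> X (u + v); zsN : forall u, X u -> X (- u) }.

Lemma zsB X u v : zsub X -> X u -> X v -> X (u - v).
Proof. by move=> hX hu hv; apply: zsD => //; apply: zsN. Qed.
Lemma zsMn X u m : zsub X -> X u -> X (u *+ m).
Proof.
move=> hX hu; elim: m => [|m ih]; first by rewrite mulr0n; exact: zs0.
by rewrite mulrS; exact: zsD.
Qed.
Lemma zs_sub X : zsub X -> is_subgroup (X : A -> Prop).
Proof. move=> hX; constructor; [exact: (zs0 hX)|exact: (zsD hX)|exact: (zsN hX)]. Qed.
Lemma sub_zs (X : A -> Prop) : is_subgroup X -> zsub X.
Proof. by case=> h1 h2 h3; constructor. Qed.

Lemma zl1 (V : zmodType) (a b d : V) : -(a - b) - (d + b) = -a - d.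
Proof.
apply/eqP; rewrite -subr_eq0; apply/eqP.
apply: (@zmod_lin _ (fun W t => -(t 0%N - t 1%N) - (t 2%N + t 1%N) - (- t 0%N - t 2%N))
  (fun i => match i with 0 => a | 1 => b | _ => d end)).
  by move=> W1 W2 L hD hN t; rewrite !(hD, hN).
by move=> R t; ring.
Qed.

Lemma zl2 (V : zmodType) (a b e d : V) : a - (b - e) - d = a - b - d + e.
Proof.
apply/eqP; rewrite -subr_eq0; apply/eqP.
apply: (@zmod_lin _ (fun W t => t 0%N - (t 1%N - t 2%N) - t 3%N - (t 0%N - t 1%N - t 3%N + t 2%N))
  (fun i => match i with 0 => a | 1 => b | 2 => e | _ => d end)).
  by move=> W1 W2 L hD hN t; rewrite !(hD, hN).
by move=> R t; ring.
Qed.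
Lemma zl3 (V : zmodType) (a b e d k : V) : a - (b + e) - (d + k) = a - b - d - e - k.
Proof.
apply/eqP; rewrite -subr_eq0; apply/eqP.
apply: (@zmod_lin _ (fun W t => t 0%N - (t 1%N + t 2%N) - (t 3%N + t 4%N)
  - (t 0%N - t 1%N - t 3%N - t 2%N - t 4%N))
  (fun i => match i with 0 => a | 1 => b | 2 => e | 3 => d | _ => k end)).
  by move=> W1 W2 L hD hN t; rewrite !(hD, hN).
by move=> R t; ring.
Qed.

Lemma U_mul2 (U : Q -> Prop) x y x' y' : is_normal U -> U (x^^-1 ** x') -> U (y^^-1 ** y') ->
  U ((x ** y)^^-1 ** (x' ** y')).
Proof.
move=> Un hx hy; have h1 := Vmulr Un y hx; have h2 := Vmull x' hy.
exact: (Vtrans Un h1 h2).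
Qed.

Section Lg.
Variable X : Ab -> Prop.
Hypothesis hX : zsub X.
Variable c : Ab.
Hypothesis hc : ~ X c.
Hypothesis hcp : X (c *+ p).

Lemma Xcmul m : X (c *+ (p * m)). Proof. by rewrite mulrnA; exact: zsMn hX hcp. Qed.

Lemma Xc_dvd j : X (c *+ j) -> (p %| j)%N.
Proof.
move=> hj; apply/negPn/negP => nd.
have cop : coprime p j by rewrite prime_coprime.
have [a _ ha] := Bezoutl j (prime_gt0 pp).
rewrite (eqP cop) in ha; case/dvdnP: ha => t ht.
apply: hc.
have h1 : X (c *+ (a * j)) by rewrite mulnC mulrnA; exact: zsMn hX hj.
have h2 : X (c *+ (1 + a * j)) by rewrite ht mulnC; exact: Xcmul.
by have := zsB hX h2 h1; rewrite mulrnDr mulr1n addrK.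
Qed.

Lemma Xc_mod i j : i = j %[mod p] -> X (c *+ i - c *+ j).
Proof.
wlog le : i j / (j <= i)%N.
  move=> H; case: (leqP j i) => hij; first exact: H.
  move=> e; have := zsN hX (H j i (ltnW hij) (esym e)); by rewrite opprB.
move=> /eqP; rewrite eqn_mod_dvd // => /dvdnP[m hm].
by rewrite -(subnK le) mulrnDr addrK hm mulnC; exact: Xcmul.
Qed.

Lemma Xc_modV i j : X (c *+ i - c *+ j) -> i = j %[mod p].
Proof.
wlog le : i j / (j <= i)%N.
  move=> H; case: (leqP j i) => hij; first exact: H.
  move=> hx; apply/esym/H; first exact: ltnW.
  by have := zsN hX hx; rewrite opprB.
rewrite -(subnK le) mulrnDr addrK => /Xc_dvd hd.
apply/eqP; rewrite eqn_mod_dvd ?leq_addl //; by rewrite addnK.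
Qed.

Definition D (y : Ab) := exists i, X (y - c *+ i).
Definition lg (y : Ab) : Fp :=
  match pselect (D y) with left h => (proj1_sig (cid h))%:R | right _ => 0 end.

Lemma lgE y i : X (y - c *+ i) -> lg y = i%:R.
Proof.
move=> hi; rewrite /lg; case: pselect => [h|]; last by case; exists i.
case: (cid h) => j hj /=.
rewrite -Fp_nat_mod // -[RHS]Fp_nat_mod //; congr _%:R.
apply: Xc_modV.
by have := zsB hX hi hj; rewrite opprB addrC addrA subrK.
Qed.

Lemma D_X y : X y -> D y.
Proof. by move=> h; exists 0%N; rewrite mulr0n subr0. Qed.
Lemma lg_X y : X y -> lg y = 0.
Proof. by move=> h; rewrite (lgE (i := 0)) ?mulr0n ?subr0. Qed.
Lemma D_c : D c. Proof. by exists 1%N; rewrite mulr1n subrr; exact: zs0. Qed.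

Lemma Dzs : zsub D.
Proof.
split; first by apply: D_X; exact: zs0.
  move=> u v [i hi] [j hj]; exists (i + j)%N.
  by have := zsD hX hi hj; rewrite mulrnDr opprD addrACA.
move=> u [i hi]; exists (i * p.-1)%N.
have h2 : X (c *+ (i * p)) by rewrite mulnC; exact: Xcmul.
have := zsB hX (zsN hX hi) h2.
have -> : (i * p = i * p.-1 + i)%N by rewrite -{1}(prednK (prime_gt0 pp)) mulnS addnC.
by rewrite mulrnDr zl1.
Qed.

Lemma lgD u v : D u -> D v -> lg (u + v) = lg u + lg v.
Proof.
move=> [i hi] [j hj]; rewrite (lgE hi) (lgE hj) -natrD; apply: lgE.
by have := zsD hX hi hj; rewrite mulrnDr opprD addrACA.
Qed.
Lemma lgN u : D u -> lg (- u) = - lg u.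
Proof.
move=> hu; apply/eqP; rewrite -subr_eq0 opprK addrC -lgD //; last by apply: zsN Dzs _ _.
by rewrite subrr; apply/eqP; apply: lg_X; exact: zs0.
Qed.
Lemma lgB u v : D u -> D v -> lg (u - v) = lg u - lg v.
Proof. by move=> hu hv; rewrite lgD ?lgN //; apply: zsN Dzs _ _. Qed.

Lemma lg_inj0 y : D y -> lg y = 0 -> X y.
Proof.
move=> [i hi]; rewrite (lgE hi) => h.
have := congr1 (fun t : Fp => (t : nat)) h; rewrite (val_Fp_nat pp) /= => hm.
have h2 : X (c *+ i - c *+ 0) by apply: Xc_mod; rewrite hm mod0n.
by have := zsD hX hi h2; rewrite mulr0n subr0 subrK.
Qed.

Definition Ec (t : Fp) : Ab := c *+ (t : nat).
Lemma D_Ec t : D (Ec t). Proof. by exists (t : nat); rewrite subrr; exact: zs0. Qed.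
Lemma lg_Ec t : lg (Ec t) = t.
Proof. by rewrite (lgE (i := (t : nat))) ?natr_Zp // subrr; exact: zs0. Qed.

Lemma lg_d1 (h : Q -> Ab) x y : (forall a, D (h a)) ->
  D (d1 h x y) /\ lg (d1 h x y) = d1 (fun a => lg (h a)) x y.
Proof.
move=> hD; have Z := Dzs.
split; first by apply: zsD => //; apply: zsB.
by rewrite /d1 lgD ?lgB //; apply: zsB.
Qed.

Lemma lg_d2 (F : Q -> Q -> Ab) x y z : (forall a b, D (F a b)) ->
  D (d2 F x y z) /\ lg (d2 F x y z) = d2 (fun a b => lg (F a b)) x y z.
Proof.
move=> hD; have Z := Dzs.
have h1 : D (F y z - F (x ** y) z) by apply: zsB.
have h2 : D (F y z - F (x ** y) z + F x (y ** z)) by apply: zsD.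
split; first by apply: zsB.
by rewrite /d2 lgB // lgD // lgB.
Qed.

Lemma lg_d3 (K : Q -> Q -> Q -> Ab) x y z w : (forall a b d, D (K a b d)) ->
  D (d3 K x y z w) /\ lg (d3 K x y z w) = d3 (fun a b d => lg (K a b d)) x y z w.
Proof.
move=> hD; have Z := Dzs.
have h1 : D (K y z w - K (x ** y) z w) by apply: zsB.
have h2 : D (K y z w - K (x ** y) z w + K x (y ** z) w) by apply: zsD.
have h3 : D (K y z w - K (x ** y) z w + K x (y ** z) w - K x y (z ** w)) by apply: zsB.
split; first by apply: zsD.
by rewrite /d3 lgD // lgB // lgD // lgB.
Qed.

Lemma chase : (forall f : Q -> Q -> Ab, (forall x y z, D (d2 f x y z)) ->
  exists U (F : Q -> Q -> Ab) (h : Q -> Ab), p_normal p U /\ cts2 U F /\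
    (forall x y z, D (d2 F x y z)) /\ forall x y, D (f x y - F x y - d1 h x y)) ->
  forall f : Q -> Q -> Ab, (forall x y z, X (d2 f x y z)) ->
  exists U (F : Q -> Q -> Ab) (h : Q -> Ab), p_normal p U /\ cts2 U F /\
    (forall x y z, X (d2 F x y z)) /\ forall x y, X (f x y - F x y - d1 h x y).
Proof.
move=> IH f hf.
have Z := Dzs.
have hfD x y z : D (d2 f x y z) by apply: D_X.
case: (IH f hfD) => U1 [F1 [h1 [hU1 [cF1 [hF1 hG]]]]].
have U1n : is_normal U1 by case: hU1.
pose G x y := f x y - F1 x y - d1 h1 x y.
pose phi3 x y z := lg (d2 F1 x y z).
have cphi3 : cts3 U1 phi3.
  move=> x y z x' y' z' hx hy hz; rewrite /phi3 /d2.
  have hxy := U_mul2 U1n hx hy; have hyz := U_mul2 U1n hy hz.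
  rewrite (cF1 y z y' z') // (cF1 (x ** y) z (x' ** y') z') //.
  by rewrite (cF1 x (y ** z) x' (y' ** z')) // (cF1 x y x' y').
have dphi3 x y z w : d3 phi3 x y z w = 0.
  rewrite /phi3 -(lg_d3 _ _ _ _ (fun a b d => hF1 a b d)).2 d3d2.
  by apply: lg_X; exact: zs0.
have hbeta : exists beta, forall x y z, phi3 x y z = d2 beta x y z.
  exists (fun x y => - lg (G x y)) => x y z.
  rewrite d2N -(lg_d2 _ _ _ (fun a b => hG a b)).2 /G !d2B d2d1 subr0.
  by rewrite lgB // (lg_X (hf x y z)) sub0r opprK.
case: (inj3 pp QC hU1 cphi3 dphi3 hbeta) => U2 [kappa [hU2 [ckappa hk]]].
pose F2 x y := F1 x y - Ec (kappa x y).
have hF2 x y z : X (d2 F2 x y z).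
  have hE a b : D (Ec (kappa a b)) by exact: D_Ec.
  have hd := lg_d2 x y z hE.
  rewrite /F2 d2B; apply: lg_inj0; first by apply: zsB; [|apply: hF1|apply: hd.1].
  rewrite lgB //; last exact: hd.1.
  rewrite hd.2 /d2 !lg_Ec -/(d2 kappa x y z) -hk; exact: subrr.
pose G2 x y := f x y - F2 x y - d1 h1 x y.
have hG2 x y : D (G2 x y).
  by rewrite /G2 /F2 zl2; apply: zsD; [|apply: hG|apply: D_Ec].
pose phi2 x y := lg (G2 x y).
have dphi2 x y z : d2 phi2 x y z = 0.
  rewrite /phi2 -(lg_d2 _ _ _ (fun a b => hG2 a b)).2 /G2 d2B d2B d2d1 subr0.
  rewrite lgB; [|apply: D_X; exact: hf|apply: D_X; exact: hF2].
  by rewrite (lg_X (hf x y z)) (lg_X (hF2 x y z)) subrr.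
case: (surj2 pp QC dphi2) => U3 [mu [eta [hU3 [cmu [dmu hphi2]]]]].
exists (fun x => (U1 x /\ U2 x) /\ U3 x), (fun x y => F2 x y + Ec (mu x y)),
  (fun x => h1 x + Ec (eta x)).
split; first by apply: p_normal_I => //; apply: p_normal_I.
split.
  move=> x y x' y' [[hx1 hx2] hx3] [[hy1 hy2] hy3].
  by rewrite /= /F2 (cF1 x y x' y') // (ckappa x y x' y') // (cmu x y x' y').
split.
  move=> x y z; rewrite d2D; apply: zsD => //.
  have hE a b : D (Ec (mu a b)) by exact: D_Ec.
  have hd := lg_d2 x y z hE.
  apply: lg_inj0; first exact: hd.1.
  by rewrite hd.2 /d2 !lg_Ec -/(d2 mu x y z) dmu.
move=> x y; rewrite d1D zl3 -/(G2 x y).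
have hE a : D (Ec (eta a)) by exact: D_Ec.
have hd := lg_d1 x y hE.
have hm : D (G2 x y - Ec (mu x y)) by apply: (zsB Z) => //; apply: D_Ec.
apply: lg_inj0; first exact: (zsB Z hm hd.1).
rewrite lgB //; last exact: hd.1.
rewrite lgB ?lg_Ec //; last exact: D_Ec.
rewrite hd.2 /d1 !lg_Ec -/(d1 eta x y) -/(phi2 x y) hphi2.
by ring.
Qed.
End Lg.

Definition Sprop (X : Ab -> Prop) := forall f : Q -> Q -> Ab,
  (forall x y z, X (d2 f x y z)) ->
  exists U (F : Q -> Q -> Ab) (h : Q -> Ab), p_normal p U /\ cts2 U F /\
    (forall x y z, X (d2 F x y z)) /\ forall x y, X (f x y - F x y - d1 h x y).

Lemma pnT : p_normal p (fun _ : Q => True).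
Proof.
split; first by split; first split.
exists 0%N, (fun _ => gone Q) => g; exists (Ordinal (ltn0Sn 0)); split => // j _.
apply: val_inj => /=; have := ltn_ord j; move: (j : nat); rewrite expn0; by case.
Qed.

Lemma gpowE (a : Ab) m : gpow a m = a *+ m.
Proof. by elim: m => [|m ih] //=; rewrite mulrS ih. Qed.

Lemma main_ind (N0 : Ab -> Prop) : p_normal p (N0 : A -> Prop) ->
  forall X, zsub X -> (forall a, N0 a -> X a) -> Sprop X.
Proof.
move=> [N0n [k0 [r0 ru0]]].
suff H : forall m (X : Ab -> Prop), #|[set i | ~~ `[< X (r0 i) >]]| = m -> zsub X -> (forall a, N0 a -> X a) -> Sprop X.
  by move=> X; apply: (H _ X erefl).
elim/ltn_ind => m IH X hm hX hN0X.
have [allX|] := pselect (forall a, X a).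
  move=> f hf; exists (fun _ => True), (fun _ _ => 0), (fun _ => 0).
  split; first exact: pnT.
  by split; [move=> *|split=> *; apply: allX].
move=> /existsNP[a ha]; rewrite -/Ab in a ha *.
have hpow : X (a *+ (p ^ k0)).
  by apply: hN0X; rewrite -gpowE; have := V_pow N0n ru0 a.
have exP : exists j, `[< X (a *+ (p ^ j)) >] by exists k0; apply/asboolP.
case: (ex_minnP exP) => j /asboolP hj jmin.
have j0 : j <> 0%N by move=> j0; apply: ha; move: hj; rewrite j0 expn0 mulr1n.
pose c := a *+ (p ^ j.-1).
have j0' : (0 < j)%N by rewrite lt0n; apply/eqP.
have hc : ~ X c.
  by move=> hc; have := jmin j.-1 (introT (asboolP _) hc); rewrite -ltnS prednK // ltnn.
have hcp : X (c *+ p) by rewrite /c -mulrnA -expnSr prednK.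
apply: (@chase X hX c hc hcp).
have Dz := @Dzs X hX c hcp.
have hlt : (#|[set i | ~~ `[< D X c (r0 i) >]]| < m)%N.
  rewrite -hm; apply: proper_card; apply/properP; split.
  apply/subsetP => i; rewrite !inE => /asboolPn hi; apply/asboolPn => hi2; apply: hi.
  exact: D_X.
pose i := idx ru0 c.
have hi := idxP ru0 c; rewrite -/i in hi.
have hXi : ~ X (r0 i).
  move=> hx; apply: hc; have := zsD hX hx (hN0X _ hi).
  by rewrite Ab_addE mulKVg'.
exists i; rewrite !inE; first by apply/asboolPn.
rewrite negbK; apply/asboolP; exists 1%N; rewrite mulr1n.
have := zsN hX (hN0X _ hi); rewrite Ab_oppE invMg' invgK' => h; rewrite addrC; exact: h.
apply: (IH _ hlt (D X c) erefl Dz).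
by move=> b /hN0X; exact: D_X.
Qed.

Section Ext.
Variable G : Defs.group.
Local Notation "x *g y" := (@gmul G x y) (at level 40, left associativity).
Local Notation gi := (@ginv G).
Local Notation "1g" := (gone G).
Local Notation "1q" := (gone Q).
Variables (iota : A -> G) (eps : G -> Q).
Hypotheses (hiota : is_hom iota) (heps : is_hom eps) (iinj : injective iota)
  (esurj : forall q, exists g, eps g = q)
  (hker : forall g, (exists a, iota a = g) <-> eps g = 1q)
  (hcent : forall a g, iota a *g g = g *g iota a).

Lemma iotaD (a b : Ab) : iota (a + b) = iota a *g iota b. Proof. exact: hiota. Qed.
Lemma iota0 : iota (0 : Ab) = 1g. Proof. exact: hom1. Qed.
Lemma eps_iota a : eps (iota a) = 1q. Proof. by apply/hker; exists a. Qed.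
Lemma H1 (a b : Ab) g : iota a *g (iota b *g g) = iota (a + b) *g g.
Proof. by rewrite iotaD mulgA'. Qed.
Lemma H2 (a b : Ab) g k : (iota a *g g) *g (iota b *g k) = iota (a + b) *g (g *g k).
Proof.
by rewrite -mulgA' (mulgA' g) -hcent -mulgA' H1.
Qed.

Definition ia (g : G) : Ab :=
  match pselect (exists a, iota a = g) with left h => proj1_sig (cid h) | right _ => 0 end.
Lemma iaK g : eps g = 1q -> iota (ia g) = g.
Proof.
move=> /hker h; rewrite /ia; case: pselect => [h'|//].
exact: (proj2_sig (cid h')).
Qed.

Definition sQ (q : Q) : G := proj1_sig (cid (esurj q)).
Lemma eps_sQ q : eps (sQ q) = q. Proof. exact: (proj2_sig (cid (esurj q))). Qed.

Definition fQ (x y : Q) : Ab := ia (sQ x *g sQ y *g gi (sQ (x ** y))).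
Lemma fQE x y : iota (fQ x y) *g sQ (x ** y) = sQ x *g sQ y.
Proof.
rewrite /fQ iaK ?mulgKV' //.
by rewrite !heps (homV _ heps) !eps_sQ mulgV'.
Qed.

Lemma fQ_coc x y z : d2 fQ x y z = 0.
Proof.
have E : fQ x y + fQ (x ** y) z = fQ y z + fQ x (y ** z).
  apply: iinj; apply: (@mulIg' _ (sQ (x ** y ** z))).
  have L : iota (fQ x y + fQ (x ** y) z) *g sQ (x ** y ** z) = sQ x *g sQ y *g sQ z.
    by rewrite iotaD -mulgA' fQE mulgA' fQE.
  have R : iota (fQ y z + fQ x (y ** z)) *g sQ (x ** (y ** z)) = sQ x *g sQ y *g sQ z.
    by rewrite iotaD -mulgA' (fQE x (y ** z)) mulgA' hcent -mulgA' fQE mulgA'.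
  by rewrite L -(mulgA' x) R.
rewrite /d2; apply/eqP; rewrite -subr_eq0 subr0; apply/eqP.
have -> : fQ y z - fQ (x ** y) z + fQ x (y ** z) - fQ x y =
   (fQ y z + fQ x (y ** z)) - (fQ x y + fQ (x ** y) z).
  apply/eqP; rewrite -subr_eq0; apply/eqP.
  apply: (@zmod_lin _ (fun W t => t 0%N - t 1%N + t 2%N - t 3%N - ((t 0%N + t 2%N) - (t 3%N + t 1%N)))
   (fun i => match i with 0 => fQ y z | 1 => fQ (x ** y) z | 2 => fQ x (y ** z) | _ => fQ x y end)).
    by move=> W1 W2 L hD hN t; rewrite !(hD, hN).
  by move=> R t; ring.
by rewrite E subrr.
Qed.

Section Ext2.
Variable N : Ab -> Prop.
Hypothesis hN : p_normal p (N : A -> Prop).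
Variables (U : Q -> Prop) (F : Q -> Q -> Ab) (h : Q -> Ab).
Hypotheses (hU : p_normal p U) (cF : cts2 U F) (hF : forall x y z, N (d2 F x y z))
  (hfF : forall x y, N (fQ x y - F x y - d1 h x y)).

Lemma Nz : zsub N. Proof. by case: hN => [[hs _] _]; apply: sub_zs. Qed.
Lemma Un : is_normal U. Proof. by case: hU. Qed.
Lemma U1 : U 1q. Proof. exact: (V1 Un). Qed.

Definition c0 := F 1q 1q.
Definition t (q : Q) : G := iota (- h q - c0) *g sQ q.
Definition e (x y : Q) : Ab := fQ x y - d1 h x y - c0.

Lemma eps_t q : eps (t q) = q.
Proof. by rewrite /t heps eps_iota eps_sQ mul1g'. Qed.

Lemma mulT (a b : Ab) x y : (iota a *g t x) *g (iota b *g t y) = iota (a + b + e x y) *g t (x ** y).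
Proof.
rewrite /t (H1 a (- h x - c0)) (H1 b (- h y - c0)) H2 -fQE (H1 _ (fQ x y)) (H1 (a + b + e x y)).
congr (iota _ *g _); rewrite /e /d1.
apply: (@subr0_eq Ab).
apply: (@zmod_lin _ (fun W t => (t 0%N + (- t 1%N - t 2%N) + (t 3%N + (- t 4%N - t 2%N)) + t 5%N)
   - (t 0%N + t 3%N + (t 5%N - (t 4%N - t 6%N + t 1%N) - t 2%N) + (- t 6%N - t 2%N)))
  (fun i => match i with 0 => a | 1 => h x | 2 => c0 | 3 => b | 4 => h y | 5 => fQ x y
     | _ => h (x ** y) end)).
  by move=> W1 W2 L hD hN' t; rewrite !(hD, hN').
by move=> R t; ring.
Qed.

Definition w (g : G) : Ab := ia (g *g gi (t (eps g))).
Lemma dec g : g = iota (w g) *g t (eps g).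
Proof.
rewrite /w iaK ?mulgKV' //.
by rewrite heps (homV _ heps) eps_t mulgV'.
Qed.
Lemma eps_dec a q : eps (iota a *g t q) = q.
Proof. by rewrite heps eps_iota eps_t mul1g'. Qed.
Lemma w_dec a q : w (iota a *g t q) = a.
Proof.
apply: iinj; apply: (@mulIg' _ (t q)).
by have := dec (iota a *g t q); rewrite eps_dec => <-.
Qed.
Lemma t1 : t 1q = iota (e 1q 1q).
Proof.
by have := mulT 0 0 1q 1q; rewrite iota0 !mul1g' !add0r => /mulIg'.
Qed.
Lemma w_mul g k : w (g *g k) = w g + w k + e (eps g) (eps k).
Proof. by rewrite {1}(dec g) {1}(dec k) mulT w_dec. Qed.
Lemma w_one : w 1g = - e 1q 1q.
Proof.
have -> : 1g = iota (- e 1q 1q) *g t 1q.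
  by rewrite t1 -iotaD addNr iota0.
by rewrite w_dec.
Qed.
Lemma w_inv g : w (gi g) = - e 1q 1q - w g - e (eps (gi g)) (eps g).
Proof.
have := w_mul (gi g) g; rewrite mulVg' w_one => ->.
by rewrite addrAC !addrK.
Qed.

Lemma FU x y : U x -> U y -> F x y = c0.
Proof.
move=> hx hy; symmetry; apply: cF; by rewrite invg1' mul1g'.
Qed.
Lemma eN x y : N (e x y - (F x y - c0)).
Proof.
have -> : e x y - (F x y - c0) = fQ x y - F x y - d1 h x y.
  rewrite /e; apply: (@subr0_eq Ab).
  apply: (@zmod_lin _ (fun W t => t 0%N - t 1%N - t 2%N - (t 3%N - t 2%N) - (t 0%N - t 3%N - t 1%N))
    (fun i => match i with 0 => fQ x y | 1 => d1 h x y | 2 => c0 | _ => F x y end)).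
    by move=> W1 W2 L hD hN' t; rewrite !(hD, hN').
  by move=> R t; ring.
exact: hfF.
Qed.
Lemma eU x y : U x -> U y -> N (e x y).
Proof. by move=> hx hy; have := eN x y; rewrite FU // subrr subr0. Qed.
Lemma dF1 q : N (F 1q q - F 1q 1q).
Proof. by have := hF 1q 1q q; rewrite /d2 !mul1g' subrr add0r. Qed.

Definition M (g : G) := U (eps g) /\ N (w g).

Lemma M_normal : is_normal M.
Proof.
have Z := Nz; have Un := Un.
split; first split.
- split; first by rewrite (hom1 heps); exact: U1.
  by rewrite w_one; apply: zsN => //; apply: eU; exact: U1.
- move=> g k [hg1 hg2] [hk1 hk2]; split; first by rewrite heps; exact: (VM Un).
  by rewrite w_mul; apply: zsD => //; [apply: zsD|apply: eU].
- move=> g [hg1 hg2]; have hgi : U (eps (gi g)) by rewrite (homV _ heps); exact: (VV Un).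
  split => //; rewrite w_inv; apply: zsB => //; last by apply: eU.
  by apply: zsB => //; apply: zsN => //; apply: eU; exact: U1.
move=> g x [hg1 hg2]; split.
  by rewrite !heps (homV _ heps); exact: (VJ Un).
set u := eps g; set q := eps x.
rewrite w_mul w_mul w_inv heps (homV _ heps) -/u -/q.
have e1 : F u q = F 1q q.
  apply: cF; first by rewrite mulg1'; exact: (VV Un).
  exact: (Vrefl Un).
have e2 : F (ginv q) (u ** q) = F (ginv q) q.
  apply: cF; first exact: (Vrefl Un).
  by rewrite invMg' -mulgA'; apply: (VJ Un); exact: (VV Un).
have n2 := eN 1q 1q; have n3 := eN (ginv q) q; have n4 := eN u q;
  have n5 := eN (ginv q) (u ** q); have n6 := dF1 q.
rewrite e1 in n4; rewrite e2 in n5; rewrite -/c0 in n2.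
have -> : - e 1q 1q - w x - e (ginv q) q + (w g + w x + e u q) + e (ginv q) (u ** q) =
  w g - (e 1q 1q - (c0 - c0)) - (e (ginv q) q - (F (ginv q) q - c0))
  + (e u q - (F 1q q - c0)) + (e (ginv q) (u ** q) - (F (ginv q) q - c0))
  + (F 1q q - c0).
  apply: (@subr0_eq Ab).
  apply: (@zmod_lin _ (fun W t => - t 0%N - t 1%N - t 2%N + (t 3%N + t 1%N + t 4%N) + t 5%N
     - (t 3%N - (t 0%N - (t 6%N - t 6%N)) - (t 2%N - (t 7%N - t 6%N)) + (t 4%N - (t 8%N - t 6%N))
        + (t 5%N - (t 7%N - t 6%N)) + (t 8%N - t 6%N)))
    (fun i => match i with 0 => e 1q 1q | 1 => w x | 2 => e (ginv q) q | 3 => w g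
       | 4 => e u q | 5 => e (ginv q) (u ** q) | 6 => c0 | 7 => F (ginv q) q | _ => F 1q q end)).
    by move=> W1 W2 L hD hN' t; rewrite !(hD, hN').
  by move=> R t; ring.
by do 5 (apply: zsD => //; try apply: zsN => //).
Qed.

Lemma M_index : has_ppower_index p M.
Proof.
have Z := Nz; have Un := Un.
case: hU => _ [kU [rU ruU]]; case: hN => _ [kA [rA ruA]].
pose R (i : 'I_(p ^ kU)) (b : 'I_(p ^ kA)) := iota (rA b) *g t (rU i).
have key g i b : M (gi (R i b) *g g) <-> U (ginv (rU i) ** eps g) /\
    N (@gmul A (ginv (rA b)) (- e 1q 1q - e (ginv (rU i)) (rU i) + w g + e (ginv (rU i)) (eps g))).
  rewrite /M w_mul w_inv /R (homV _ heps) eps_dec w_dec heps (homV _ heps) eps_dec.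
  have -> : - e 1q 1q - (rA b : Ab) - e (ginv (rU i)) (rU i) + w g + e (ginv (rU i)) (eps g) =
    (- (rA b : Ab) + (- e 1q 1q - e (ginv (rU i)) (rU i) + w g + e (ginv (rU i)) (eps g)) : Ab).
    apply: (@subr0_eq Ab).
    apply: (@zmod_lin _ (fun W t => - t 0%N - t 1%N - t 2%N + t 3%N + t 4%N
       - (- t 1%N + (- t 0%N - t 2%N + t 3%N + t 4%N)))
      (fun i0 => match i0 with 0 => e 1q 1q | 1 => rA b | 2 => e (ginv (rU i)) (rU i)
         | 3 => w g | _ => e (ginv (rU i)) (eps g) end)).
      by move=> W1 W2 L hD hN' t; rewrite !(hD, hN').
    by move=> R' t; ring.
  by [].
pose T := ('I_(p ^ kU) * 'I_(p ^ kA))%type.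
have cT : (p ^ (kU + kA))%N = #|{: T}| by rewrite card_prod !card_ord expnD.
exists (kU + kA), (fun i => let ij := enum_val (cast_ord cT i) in R ij.1 ij.2) => g.
pose i0 := idx ruU (eps g).
pose z := - e 1q 1q - e (ginv (rU i0)) (rU i0) + w g + e (ginv (rU i0)) (eps g).
pose b0 := idx ruA z.
exists (cast_ord (esym cT) (enum_rank (i0, b0))); split.
  rewrite /= cast_ordKV enum_rankK /=; apply/key; split; first exact: (idxP ruU (eps g)).
  exact: (idxP ruA z).
move=> j /=; set ij := enum_val _ => /key [h1 h2].
apply: (@cast_ord_inj _ _ cT); rewrite cast_ordKV.
apply: enum_val_inj; rewrite enum_rankK -/ij.
have ei : ij.1 = i0 by apply: idx_uniq.
move: h2; rewrite ei -/z => h2.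
have eb : ij.2 = b0 by apply: idx_uniq.
by rewrite -ei -eb; case: (ij).
Qed.

Lemma M_emb (a : Ab) : M (iota a) -> N a.
Proof.
have Z := Nz.
case=> _; have -> : iota a = iota (a - e 1q 1q) *g t 1q by rewrite t1 -iotaD subrK.
rewrite w_dec => h1; have := zsD Z h1 (eU U1 U1); by rewrite subrK.
Qed.
End Ext2.

Lemma ext_main (N : Ab -> Prop) : p_normal p (N : A -> Prop) ->
  exists M : G -> Prop, p_normal p M /\ forall a, M (iota a) -> N a.
Proof.
move=> hN.
have hNz : zsub N by case: hN => [[hs _] _]; apply: sub_zs.
have hcoc : forall x y z, N (d2 fQ x y z) by move=> x y z; rewrite fQ_coc; exact: zs0.
case: (main_ind hN hNz (fun a h => h) hcoc) => U [F [h [hU [cF [hF hfF]]]]].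
exists (M N U F h); split; first split.
- exact: (M_normal hN hU cF hF hfF).
- exact: (M_index hN F h hU).
exact: (M_emb hN hU cF hfF).
Qed.
End Ext.
End Main.

End M_P4.
Import M_P4.

Import Pilot.Defs.
Theorem proposition1p1 (A G Q : group) (iota : A -> G) (eps : G -> Q) :
  central_extension iota eps -> fin_gen A -> in_class_C Q ->
  forall p : nat, prime p -> top_p_embedded iota p.
Proof.
move=> [hi he inj sur [ker cent]] _ QC p pp N hN.
have Acomm : forall x y : A, gmul x y = gmul y x.
  move=> x y; apply: inj; rewrite !hi; exact: cent.
exact: (ext_main pp QC Acomm hi he inj sur ker cent hN).
Qed.
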